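(* Let $L$ be a normal modal logic with the finite model property. In $L\mathbf{KFr}_{lf}$, epimorphisms are stable under pullback along regular monomorphisms: if $f:W\to V$ is an epimorphism and $m:U\to V$ a regular monomorphism, then the pullback of $f$ along $m$ is an epimorphism.
   Context: $L\mathbf{KFr}_{lf}$ is the category of locally finite Kripke frames validating $L$ (each point reaches only finitely many points via finite $\prec$-paths) with p-morphisms (maps $f$ with $w\prec w'\Rightarrow f(w)\prec f(w')$ and, if $f(w)\prec v'$, some $w'\succ w$ has $f(w')=v'$). This category has all limits. *)

(* Defs.v *)
From Stdlib Require Import List Relations.
Import ListNotations.

Inductive form : Type :=
| Var : nat -> form
| Bot : form
| Imp : form -> form -> form
| Box : form -> form.

Definition Neg (a : form) : form := Imp a Bot.
Definition Dia (a : form) : form := Neg (Box (Neg a)).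

Fixpoint subst (s : nat -> form) (a : form) : form :=
  match a with
  | Var n => s n
  | Bot => Bot
  | Imp a b => Imp (subst s a) (subst s b)
  | Box a => Box (subst s a)
  end.

(** Propositional tautologies: formulas true under every boolean evaluation in
    which variables and boxed subformulas are treated as atoms. *)
Fixpoint beval (v : form -> bool) (a : form) : bool :=
  match a with
  | Var n => v (Var n)
  | Bot => false
  | Imp a b => orb (negb (beval v a)) (beval v b)
  | Box a => v (Box a)
  end.

Definition tautology (a : form) : Prop := forall v, beval v a = true.

Definition normal_modal_logic (L : form -> Prop) : Prop :=
  (forall a, tautology a -> L a) /\
  (forall a b, L (Imp (Box (Imp a b)) (Imp (Box a) (Box b)))) /\
  (forall a b, L a -> L (Imp a b) -> L b) /\
  (forall a, L a -> L (Box a)) /\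
  (forall s a, L a -> L (subst s a)).

Fixpoint sat {W : Type} (R : W -> W -> Prop) (V : nat -> W -> Prop)
  (w : W) (a : form) : Prop :=
  match a with
  | Var n => V n w
  | Bot => False
  | Imp a b => sat R V w a -> sat R V w b
  | Box a => forall v, R w v -> sat R V v a
  end.

Definition frame_valid {W : Type} (R : W -> W -> Prop) (a : form) : Prop :=
  forall (V : nat -> W -> Prop) (w : W), sat R V w a.

Definition frame_validates {W : Type} (R : W -> W -> Prop) (L : form -> Prop) : Prop :=
  forall a, L a -> frame_valid R a.

Definition finite_type (W : Type) : Prop := exists l : list W, forall w, In w l.

Definition fmp (L : form -> Prop) : Prop :=
  forall a, ~ L a ->
    exists (W : Type) (R : W -> W -> Prop),
      finite_type W /\ frame_validates R L /\ ~ frame_valid R a.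

Definition locally_finite {W : Type} (R : W -> W -> Prop) : Prop :=
  forall w, exists l : list W, forall v, clos_refl_trans W R w v -> In v l.

Record LKFr (L : form -> Prop) : Type := mkLKFr {
  carrier :> Type;
  rel : carrier -> carrier -> Prop;
  lf : locally_finite rel;
  validL : frame_validates rel L
}.
Arguments carrier {L} _.
Arguments rel {L} _ _ _.

Definition is_pmorphism {W V : Type} (RW : W -> W -> Prop) (RV : V -> V -> Prop)
  (f : W -> V) : Prop :=
  (forall w w', RW w w' -> RV (f w) (f w')) /\
  (forall w v', RV (f w) v' -> exists w', RW w w' /\ f w' = v').

Record pmor {L : form -> Prop} (X Y : LKFr L) : Type := mkPmor {
  pfun :> X -> Y;
  pmor_prop : is_pmorphism (rel X) (rel Y) pfun
}.
Arguments pfun {L X Y} _ _.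

Definition meq {L} {X Y : LKFr L} (f g : pmor X Y) : Prop :=
  forall x, pfun f x = pfun g x.

Definition epi {L} {W V : LKFr L} (f : pmor W V) : Prop :=
  forall (Z : LKFr L) (g h : pmor V Z),
    (forall w, g (f w) = h (f w)) -> meq g h.

Definition is_equalizer {L} {U V Z : LKFr L} (m : pmor U V) (g h : pmor V Z) : Prop :=
  (forall u, g (m u) = h (m u)) /\
  forall (T : LKFr L) (k : pmor T V),
    (forall t, g (k t) = h (k t)) ->
    exists u : pmor T U, (forall t, m (u t) = k t) /\
      forall u' : pmor T U, (forall t, m (u' t) = k t) -> meq u u'.

Definition regular_mono {L} {U V : LKFr L} (m : pmor U V) : Prop :=
  exists (Z : LKFr L) (g h : pmor V Z), is_equalizer m g h.

Definition is_pullback {L} {W V U P : LKFr L} (f : pmor W V) (m : pmor U V)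
  (p1 : pmor P U) (p2 : pmor P W) : Prop :=
  (forall x, m (p1 x) = f (p2 x)) /\
  forall (T : LKFr L) (q1 : pmor T U) (q2 : pmor T W),
    (forall t, m (q1 t) = f (q2 t)) ->
    exists u : pmor T P,
      ((forall t, p1 (u t) = q1 t) /\ (forall t, p2 (u t) = q2 t)) /\
      forall u' : pmor T P,
        (forall t, p1 (u' t) = q1 t) -> (forall t, p2 (u' t) = q2 t) -> meq u u'.

(* Main.v *)
Require Import Defs.
From Stdlib Require Import List Relations Classical ProofIrrelevance ClassicalDescription.
Import ListNotations.

Lemma sig_eq {A : Type} {P : A -> Prop} (x y : sig P) :
  proj1_sig x = proj1_sig y -> x = y.
Proof. destruct x as [x px], y as [y py]; simpl; intros E; subst; f_equal; apply proof_irrelevance. Qed.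

Lemma pmor_sat {X Y : Type} (RX : X -> X -> Prop) (RY : Y -> Y -> Prop) (k : X -> Y)
  (VX : nat -> X -> Prop) (VY : nat -> Y -> Prop) :
  is_pmorphism RX RY k -> (forall n x, VX n x <-> VY n (k x)) ->
  forall a x, sat RX VX x a <-> sat RY VY (k x) a.
Proof.
  intros [Hf Hb] HV a; induction a as [n| |a IHa b IHb|a IHa]; intros x; simpl.
  - apply HV.
  - tauto.
  - rewrite IHa, IHb; tauto.
  - split.
    + intros H y Hy. destruct (Hb x y Hy) as [x' [Hx' <-]]. apply IHa. apply H; auto.
    + intros H x' Hx'. apply IHa. apply H. apply Hf; auto.
Qed.

Lemma valid_cover {L} {X : Type} (RX : X -> X -> Prop) :
  (forall x, exists (Y : LKFr L) (k : Y -> X) (y : Y), is_pmorphism (rel Y) RX k /\ k y = x) ->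
  frame_validates RX L.
Proof.
  intros H a Ha VX x. destruct (H x) as [Y [k [y [Hk <-]]]].
  apply (pmor_sat (rel Y) RX k (fun n y => VX n (k y)) VX Hk (fun n y => iff_refl _)).
  apply (validL L Y a Ha).
Qed.

Lemma valid_inj {L} {X : Type} (RX : X -> X -> Prop) (Y : LKFr L) (k : X -> Y) :
  is_pmorphism RX (rel Y) k -> (forall x x', k x = k x' -> x = x') -> frame_validates RX L.
Proof.
  intros Hk Hi a Ha VX x.
  apply (pmor_sat RX (rel Y) k VX (fun n (y : Y) => exists x, k x = y /\ VX n x) Hk).
  - intros n x0; split; [intros; exists x0; auto | intros [x1 [E H]]; apply Hi in E; subst; auto].
  - apply (validL L Y a Ha).
Qed.

Lemma rt_map {X Y : Type} (RX : X -> X -> Prop) (RY : Y -> Y -> Prop) (k : X -> Y) :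
  (forall x x', RX x x' -> RY (k x) (k x')) ->
  forall x x', clos_refl_trans X RX x x' -> clos_refl_trans Y RY (k x) (k x').
Proof. intros H x x' Hr; induction Hr; [apply rt_step; auto | apply rt_refl | eapply rt_trans; eauto]. Qed.

Lemma list_pull {X Y : Type} (k : X -> Y) : (forall x x', k x = k x' -> x = x') ->
  forall l : list Y, exists l' : list X, forall x, In (k x) l -> In x l'.
Proof.
  intros Hi l; induction l as [|a l [l' IH]].
  - exists []; simpl; tauto.
  - destruct (classic (exists x, k x = a)) as [[x0 Hx0]|Hn].
    + exists (x0 :: l'); simpl; intros x [E|E]; [left; apply Hi; congruence | right; auto].
    + exists l'; simpl; intros x [E|E]; [exfalso; apply Hn; eauto | auto].
Qed.

Lemma lf_inj {X Y : Type} (RX : X -> X -> Prop) (RY : Y -> Y -> Prop) (k : X -> Y) :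
  (forall x x', RX x x' -> RY (k x) (k x')) -> (forall x x', k x = k x' -> x = x') ->
  locally_finite RY -> locally_finite RX.
Proof.
  intros Hf Hi HY x. destruct (HY (k x)) as [l Hl]. destruct (list_pull k Hi l) as [l' Hl'].
  exists l'. intros v Hv. apply Hl'. apply Hl. apply (rt_map RX RY k Hf); auto.
Qed.

Lemma id_pm {X : Type} (R : X -> X -> Prop) : is_pmorphism R R (fun x => x).
Proof. split; eauto. Qed.

Lemma comp_pm {X Y Z : Type} RX RY RZ (f : X -> Y) (g : Y -> Z) :
  is_pmorphism RX RY f -> is_pmorphism RY RZ g -> is_pmorphism RX RZ (fun x => g (f x)).
Proof.
  intros [f1 f2] [g1 g2]; split; auto. intros x z H.
  destruct (g2 _ _ H) as [y [Hy <-]]. destruct (f2 _ _ Hy) as [x' [Hx' <-]]. eauto.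
Qed.

Definition imf {L} {W V : LKFr L} (f : pmor W V) (v : V) : Prop := exists w, f w = v.
Definition dimf {L} {W V : LKFr L} (f : pmor W V) (v : V) : bool :=
  if excluded_middle_informative (imf f v) then false else true.

Lemma dimf_spec {L} {W V : LKFr L} (f : pmor W V) v : dimf f v = true -> ~ imf f v.
Proof. unfold dimf; destruct (excluded_middle_informative _); [discriminate | auto]. Qed.
Lemma dimf_false {L} {W V : LKFr L} (f : pmor W V) v : dimf f v = false -> imf f v.
Proof. unfold dimf; destruct (excluded_middle_informative _); [auto | discriminate]. Qed.
Lemma imf_dimf {L} {W V : LKFr L} (f : pmor W V) v : imf f v -> dimf f v = false.
Proof. unfold dimf; destruct (excluded_middle_informative _); [auto | tauto]. Qed.
Lemma nimf_dimf {L} {W V : LKFr L} (f : pmor W V) v : ~ imf f v -> dimf f v = true.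
Proof. unfold dimf; destruct (excluded_middle_informative _); [tauto | auto]. Qed.
Lemma imf_up {L} {W V : LKFr L} (f : pmor W V) v v' : imf f v -> rel V v v' -> imf f v'.
Proof.
  intros [w <-] H. destruct (proj2 (pmor_prop _ _ f) w v' H) as [w' [_ E]]. exists w'; auto.
Qed.

Definition Zc {L} {W V : LKFr L} (f : pmor W V) : Type :=
  {p : carrier V * bool | snd p = true -> ~ imf f (fst p)}.
Definition RZ {L} {W V : LKFr L} (f : pmor W V) (z z' : Zc f) : Prop :=
  rel V (fst (proj1_sig z)) (fst (proj1_sig z')) /\
  snd (proj1_sig z') = andb (snd (proj1_sig z)) (dimf f (fst (proj1_sig z'))).
Definition gZ {L} {W V : LKFr L} (f : pmor W V) (v : V) : Zc f :=
  exist (fun p : carrier V * bool => snd p = true -> ~ imf f (fst p)) (v, false) (fun H => False_ind _ (Bool.diff_false_true H)).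
Definition hZ {L} {W V : LKFr L} (f : pmor W V) (v : V) : Zc f :=
  exist _ (v, dimf f v) (dimf_spec f v).

Lemma gZ_pm {L} {W V : LKFr L} (f : pmor W V) : is_pmorphism (rel V) (RZ f) (gZ f).
Proof.
  split.
  - intros v v' H; split; simpl; auto.
  - intros v [[v' b] pf] [H1 H2]; simpl in *. exists v'; split; auto.
    apply sig_eq; simpl. subst; auto.
Qed.

Lemma hZ_pm {L} {W V : LKFr L} (f : pmor W V) : is_pmorphism (rel V) (RZ f) (hZ f).
Proof.
  split.
  - intros v v' H; split; simpl; auto.
    destruct (dimf f v) eqn:E; simpl; auto.
    apply imf_dimf. apply (imf_up f v); auto. apply dimf_false; auto.
  - intros v [[v' b] pf] [H1 H2]; simpl in *. exists v'; split; auto.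
    apply sig_eq; simpl. f_equal. rewrite H2.
    destruct (dimf f v) eqn:E; simpl; auto.
    apply imf_dimf. apply (imf_up f v); auto. apply dimf_false; auto.
Qed.

Lemma Z_lf {L} {W V : LKFr L} (f : pmor W V) : locally_finite (RZ f).
Proof.
  intros z. destruct (lf L V (fst (proj1_sig z))) as [l Hl].
  exists (map (gZ f) l ++ map (hZ f) l).
  intros z' Hz'. 
  assert (Hr : clos_refl_trans _ (rel V) (fst (proj1_sig z)) (fst (proj1_sig z'))).
  { apply (rt_map (RZ f) (rel V) (fun z => fst (proj1_sig z))); auto. intros a b [H _]; auto. }
  apply Hl in Hr. apply in_app_iff.
  destruct z' as [[v b] pf]; simpl in *. destruct b.
  - right. apply in_map_iff. exists v; split; auto. apply sig_eq; simpl.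
    rewrite nimf_dimf; auto.
  - left. apply in_map_iff. exists v; split; auto. apply sig_eq; simpl; auto.
Qed.

Lemma Z_valid {L} {W V : LKFr L} (f : pmor W V) : frame_validates (RZ f) L.
Proof.
  apply valid_cover. intros [[v b] pf]. destruct b.
  - exists V, (hZ f), v. split; [apply hZ_pm|]. apply sig_eq; simpl. rewrite nimf_dimf; auto.
  - exists V, (gZ f), v. split; [apply gZ_pm|]. apply sig_eq; simpl; auto.
Qed.

Definition ZF {L} {W V : LKFr L} (f : pmor W V) : LKFr L :=
  {| carrier := Zc f; rel := RZ f; lf := Z_lf f; validL := Z_valid f |}.

Lemma epi_surj {L} {W V : LKFr L} (f : pmor W V) : epi f -> forall v, exists w, f w = v.
Proof.
  intros Hf v.
  pose (g := ({| pfun := (gZ f : carrier V -> carrier (ZF f)); pmor_prop := gZ_pm f |} : pmor V (ZF f))).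
  pose (h := ({| pfun := (hZ f : carrier V -> carrier (ZF f)); pmor_prop := hZ_pm f |} : pmor V (ZF f))).
  assert (H : meq g h).
  { apply Hf. intros w. simpl. apply sig_eq; simpl. rewrite imf_dimf; auto. exists w; auto. }
  specialize (H v). simpl in H. apply (f_equal (fun z => snd (proj1_sig z))) in H. simpl in H.
  apply dimf_false. auto.
Qed.

Definition Ec {L} {V Z : LKFr L} (g h : pmor V Z) : Type :=
  {v : carrier V | forall v', clos_refl_trans _ (rel V) v v' -> g v' = h v'}.
Definition RE {L} {V Z : LKFr L} (g h : pmor V Z) (e e' : Ec g h) : Prop :=
  rel V (proj1_sig e) (proj1_sig e').

Lemma incl_pm {L} {V Z : LKFr L} (g h : pmor V Z) :
  is_pmorphism (RE g h) (rel V) (fun e => proj1_sig e).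
Proof.
  split.
  - intros e e' H; auto.
  - intros [v pf] v' H; simpl in *.
    unshelve eexists (exist _ v' _).
    + intros v'' Hv. apply pf. eapply rt_trans; [apply rt_step; eauto | auto].
    + simpl; split; auto.
Qed.

Lemma E_lf {L} {V Z : LKFr L} (g h : pmor V Z) : locally_finite (RE g h).
Proof.
  apply (lf_inj (RE g h) (rel V) (fun e => proj1_sig e)); auto.
  - intros x x' E; apply sig_eq; auto.
  - apply lf.
Qed.

Lemma E_valid {L} {V Z : LKFr L} (g h : pmor V Z) : frame_validates (RE g h) L.
Proof.
  apply (valid_inj (RE g h) V (fun e => proj1_sig e) (incl_pm g h)).
  intros x x' E; apply sig_eq; auto.
Qed.

Definition EF {L} {V Z : LKFr L} (g h : pmor V Z) : LKFr L :=
  {| carrier := Ec g h; rel := RE g h; lf := E_lf g h; validL := E_valid g h |}.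

Lemma rt_image {L} {U V : LKFr L} (m : pmor U V) :
  forall x y, clos_refl_trans _ (rel V) x y -> (exists u, m u = x) -> exists u, m u = y.
Proof.
  intros x y Hr; induction Hr; intros [u Hu]; eauto.
  subst. destruct (proj2 (pmor_prop _ _ m) u y H) as [u' [_ E]]; eauto.
Qed.

Lemma regmono_inj {L} {U V : LKFr L} (m : pmor U V) :
  regular_mono m -> forall x y, m x = m y -> x = y.
Proof.
  intros [Z [g [h [Heq Huniv]]]].
  assert (Hm' : forall u v', clos_refl_trans _ (rel V) (m u) v' -> g v' = h v').
  { intros u v' Hr. destruct (rt_image m _ _ Hr (ex_intro _ u eq_refl)) as [u' <-]. apply Heq. }
  pose (m' := fun u => (exist _ (m u) (Hm' u) : Ec g h)).
  assert (Hpm' : is_pmorphism (rel U) (RE g h) m').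
  { split.
    - intros u u' H. unfold RE; simpl. apply (proj1 (pmor_prop _ _ m)); auto.
    - intros u e' H. unfold RE in H; simpl in H.
      destruct (proj2 (pmor_prop _ _ m) u _ H) as [u' [Hu' E]].
      exists u'; split; auto. apply sig_eq; simpl; auto. }
  pose (incl := ({| pfun := ((fun e : Ec g h => proj1_sig e) : carrier (EF g h) -> carrier V); pmor_prop := incl_pm g h |}
                 : pmor (EF g h) V)).
  destruct (Huniv (EF g h) incl) as [uE [HuE _]].
  { intros [v pf]; simpl. apply pf, rt_refl. }
  pose (c := ({| pfun := ((fun u => uE (m' u)) : carrier U -> carrier U);
                 pmor_prop := comp_pm _ _ _ m' uE Hpm' (pmor_prop _ _ uE) |} : pmor U U)).
  destruct (Huniv U m Heq) as [u0 [_ Hu0]].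
  assert (Hc : forall x, c x = x).
  { intros x.
    assert (H1 := Hu0 c ltac:(intros t; simpl; rewrite HuE; reflexivity) x).
    assert (H2 := Hu0 ({| pfun := fun x => x; pmor_prop := id_pm _ |} : pmor U U)
                      ltac:(intros t; reflexivity) x).
    simpl in H2. rewrite <- H1; auto. }
  intros x y E. rewrite <- (Hc x), <- (Hc y). simpl.
  assert (m' x = m' y) as ->; [apply sig_eq; simpl; auto | reflexivity].
Qed.

Definition Tc {L} {W V U : LKFr L} (f : pmor W V) (m : pmor U V) : Type :=
  {p : carrier U * carrier W | m (fst p) = f (snd p)}.
Definition RT {L} {W V U : LKFr L} (f : pmor W V) (m : pmor U V) (t t' : Tc f m) : Prop :=
  rel U (fst (proj1_sig t)) (fst (proj1_sig t')) /\ rel W (snd (proj1_sig t)) (snd (proj1_sig t')).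

Lemma q1_pm {L} {W V U : LKFr L} (f : pmor W V) (m : pmor U V) :
  is_pmorphism (RT f m) (rel U) (fun t => fst (proj1_sig t)).
Proof.
  split.
  - intros t t' [H _]; auto.
  - intros [[u w] pf] u' H; simpl in *.
    assert (H' : rel V (f w) (m u')). { rewrite <- pf. apply (proj1 (pmor_prop _ _ m)); auto. }
    destruct (proj2 (pmor_prop _ _ f) w _ H') as [w' [Hw' E]].
    exists (exist _ (u', w') (eq_sym E)). simpl. split; auto. split; auto.
Qed.

Lemma q2_pm {L} {W V U : LKFr L} (f : pmor W V) (m : pmor U V) :
  is_pmorphism (RT f m) (rel W) (fun t => snd (proj1_sig t)).
Proof.
  split.
  - intros t t' [_ H]; auto.
  - intros [[u w] pf] w' H; simpl in *.
    assert (H' : rel V (m u) (f w')). { rewrite pf. apply (proj1 (pmor_prop _ _ f)); auto. }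
    destruct (proj2 (pmor_prop _ _ m) u _ H') as [u' [Hu' E]].
    exists (exist _ (u', w') E). simpl. split; auto. split; auto.
Qed.

Lemma q2_inj {L} {W V U : LKFr L} (f : pmor W V) (m : pmor U V) :
  (forall x y, m x = m y -> x = y) ->
  forall t t' : Tc f m, snd (proj1_sig t) = snd (proj1_sig t') -> t = t'.
Proof.
  intros Hi [[u w] pf] [[u' w'] pf'] E; simpl in *. subst w'.
  apply sig_eq; simpl. f_equal. apply Hi. congruence.
Qed.

Theorem proposition5p11 (L : form -> Prop)
  (HL : normal_modal_logic L) (Hfmp : fmp L)
  (W V U : LKFr L) (f : pmor W V) (m : pmor U V)
  (Hf : epi f) (Hm : regular_mono m)
  (P : LKFr L) (p1 : pmor P U) (p2 : pmor P W)
  (Hpb : is_pullback f m p1 p2) :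
  epi p1.
Proof.
  assert (Hi := regmono_inj m Hm).
  assert (Hlf : locally_finite (RT f m)).
  { apply (lf_inj (RT f m) (rel W) (fun t => snd (proj1_sig t))).
    - intros t t' [_ H]; auto.
    - apply q2_inj; auto.
    - apply lf. }
  assert (Hv : frame_validates (RT f m) L).
  { apply (valid_inj (RT f m) W (fun t => snd (proj1_sig t)) (q2_pm f m)). apply q2_inj; auto. }
  pose (TF := {| carrier := Tc f m; rel := RT f m; lf := Hlf; validL := Hv |} : LKFr L).
  pose (q1 := ({| pfun := ((fun t : Tc f m => fst (proj1_sig t)) : carrier TF -> carrier U); pmor_prop := q1_pm f m |} : pmor TF U)).
  pose (q2 := ({| pfun := ((fun t : Tc f m => snd (proj1_sig t)) : carrier TF -> carrier W); pmor_prop := q2_pm f m |} : pmor TF W)).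
  destruct (proj2 Hpb TF q1 q2) as [x [[Hx1 _] _]].
  { intros t; simpl. apply (proj2_sig t). }
  intros Z g h H u.
  destruct (epi_surj f Hf (m u)) as [w Hw].
  pose (t := exist _ (u, w) (eq_sym Hw) : Tc f m).
  specialize (Hx1 t). simpl in Hx1. rewrite <- Hx1. apply H.
Qed.
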